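(* Let $\chi$ be a kernel satisfying $(\chi_1)$ and $(\chi_2)$ with $\eta>0$. Let $f:\mathbb{R}_+\to\mathbb{R}_+$ be bounded. Then $\lim_{w\to\infty}MG^{\chi}_w(f,x)=f(x)$ at every point $x\in\mathbb{R}_+$ at which $f$ is log-continuous. Moreover, if $f\in\mathcal{UB}^{\bar\omega}_+(\mathbb{R}_+)$, then $\lim_{w\to\infty}\|MG^{\chi}_w f-f\|_{\bar\omega}=0$.
   Context: $\mathbb{R}_+$ denotes the positive reals; $\bigvee_{k\in\Lambda}T_k=\sup\{T_k:k\in\Lambda\}$. A kernel is a bounded measurable $\chi:\mathbb{R}_+\to\mathbb{R}$. Moments: $m_{\nu}(\chi)=\sup_{u>0}\bigvee_{k\in\mathbb{Z}}|\chi(e^{-k}u)||k-\log u|^{\nu}$. Condition $(\chi_1)$: $m_2(\chi)<\infty$. Condition $(\chi_2)$: $\eta:=\inf_{x\in[1,e]}\chi(x)$ exists. Weight $\bar\omega(x)=\frac1{1+\log^2x}$, $\|f\|_{\bar\omega}=\sup_{x>0}\bar\omega(x)|f(x)|$. A function $g:\mathbb{R}_+\to\mathbb{R}$ is log-uniformly continuous if for every $\epsilon>0$ there is $\delta>0$ with $|g(x)-g(y)|<\epsilon$ whenever $|\log x-\log y|\le\delta$; $f$ is log-continuous at $x$ if for every $\epsilon>0$ there is $\delta>0$ with $|f(y)-f(x)|<\epsilon$ whenever $|\log y-\log x|\le \delta$. $\mathcal{UB}^{\bar\omega}_+(\mathbb{R}_+)$ is the set of nonnegative $f:\mathbb{R}_+\to\mathbb{R}$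 such that $\bar\omega f$ is bounded and log-uniformly continuous. Operator: $MG^{\chi}_w(f,x)=\frac{\bigvee_{k\in\mathbb{Z}}\chi(e^{-k}x^{w})f(e^{k/w})}{\bigvee_{k\in\mathbb{Z}}\chi(e^{-k}x^{w})}$. *)

(* Defs.v *)
From HB Require Import structures.
From mathcomp Require Import all_boot all_order all_algebra.
From mathcomp Require Import all_classical all_reals all_analysis.
Set Implicit Arguments. Unset Strict Implicit. Unset Printing Implicit Defensive.
Import Order.TTheory GRing.Theory Num.Theory.
Import numFieldNormedType.Exports.
Local Open Scope classical_set_scope.
Local Open Scope ring_scope.

Section Defs.
Variable R : realType.

Definition Rpos : set R := [set x | 0 < x].

(* kernel: bounded measurable chi : R_+ -> R (values off R_+ are irrelevant) *)
Definition is_kernel (chi : R -> R) : Prop :=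
  measurable_fun Rpos chi /\ exists M : R, forall x, 0 < x -> `|chi x| <= M.

Definition moment (nu : R) (chi : R -> R) : \bar R :=
  ereal_sup [set ((`|chi (expR (- k%:~R) * u)| * (`|k%:~R - ln u| `^ nu))%:E)
            | u in Rpos & k in [set: int]].

Definition chi1 (chi : R -> R) : Prop := (moment 2 chi < +oo)%E.

Definition eta_set (chi : R -> R) : set R := [set chi x | x in `[1, expR 1]].

Definition chi2 (chi : R -> R) : Prop := has_inf (eta_set chi).

Definition eta_chi (chi : R -> R) : R := inf (eta_set chi).

Definition omega_bar (x : R) : R := (1 + ln x ^+ 2)^-1.

Definition wnorm (g : R -> R) : \bar R :=
  ereal_sup [set (omega_bar x * `|g x|)%:E | x in Rpos].

Definition log_unif_cont (g : R -> R) : Prop :=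
  forall eps : R, 0 < eps -> exists2 delta : R, 0 < delta &
    forall x y, 0 < x -> 0 < y -> `|ln x - ln y| <= delta -> `|g x - g y| < eps.

Definition log_cont_at (f : R -> R) (x : R) : Prop :=
  forall eps : R, 0 < eps -> exists2 delta : R, 0 < delta &
    forall y, 0 < y -> `|ln y - ln x| <= delta -> `|f y - f x| < eps.

Definition UB_omega_plus (f : R -> R) : Prop :=
  (forall x, 0 < x -> 0 <= f x) /\
  (exists M : R, forall x, 0 < x -> `|omega_bar x * f x| <= M) /\
  log_unif_cont (fun x => omega_bar x * f x).

Definition MG (chi : R -> R) (w : R) (f : R -> R) (x : R) : R :=
  sup (range (fun k : int => chi (expR (- k%:~R) * x `^ w) * f (expR (k%:~R / w))))
  / sup (range (fun k : int => chi (expR (- k%:~R) * x `^ w))).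

End Defs.

(* Main.v *)
Require Import Defs.
From HB Require Import structures.
From mathcomp Require Import all_boot all_order all_algebra.
From mathcomp Require Import all_classical all_reals all_analysis.
From mathcomp Require Import ring lra.
Import Order.TTheory GRing.Theory Num.Theory.
Import numFieldNormedType.Exports.
Local Open Scope classical_set_scope.
Local Open Scope ring_scope.
Section H.
Variable R : realType.

Lemma supA (a b : int -> R) (c E A eta : R) :
  0 <= c -> 0 < eta -> (forall k, `|a k| <= A) -> eta <= sup (range a) ->
  (forall k, `|a k| * `|b k - c| <= E) ->
  `|sup (range (fun k => a k * b k)) / sup (range a) - c| <= E / eta.
Proof.
move=> c0 eta0 HA HD HE.
have E0 : 0 <= E by apply: le_trans (HE 0); rewrite mulr_ge0.
have hsa : has_sup (range a).
  split; first by exists (a 0); exists 0.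
  by exists A => _ [k _ <-]; apply: le_trans (HA k); apply: ler_norm.
have pk : forall k, a k * b k - a k * c <= E /\ a k * c - a k * b k <= E.
  move=> k; have := HE k; rewrite -normrM mulrBr => h; split.
    by apply: le_trans h; apply: ler_norm.
  by apply: le_trans h; rewrite -normrN opprB; apply: ler_norm.
set D := sup (range a).
have D0 : 0 < D by apply: lt_le_trans HD.
have akD : forall k, a k <= D by move=> k; apply: sup_upper_bound => //; exists k.
have hsb : has_sup (range (fun k => a k * b k)).
  split; first by exists (a 0 * b 0); exists 0.
  exists (D * c + E) => _ [k _ <-]; have [h1 _] := pk k.
  have : a k * c <= D * c by apply: ler_wpM2r.
  lra.
set S := sup _.
have Sk : forall k, a k * b k <= S by move=> k; apply: sup_upper_bound => //; exists k.
have up : S <= D * c + E.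
  apply: ge_sup; first by exists (a 0 * b 0); exists 0.
  move=> _ [k _ <-]; have [h1 _] := pk k.
  have : a k * c <= D * c by apply: ler_wpM2r.
  lra.
have lo : D * c - E <= S.
  have [ce|cp] := eqVneq c 0.
    have [_ h2] := pk 0; have := Sk 0; rewrite ce !mulr0 in h2 *; lra.
  have cp' : 0 < c by rewrite lt_def cp c0.
  suff : D <= (S + E) / c.
    by rewrite ler_pdivlMr // => h; lra.
  apply: ge_sup; first by exists (a 0); exists 0.
  move=> _ [k _ <-]; rewrite ler_pdivlMr //.
  have [_ h2] := pk k; have := Sk k; lra.
have -> : S / D - c = (S - D * c) / D by field; rewrite gt_eqF.
rewrite normrM [`|D^-1|]gtr0_norm ?invr_gt0 //.
apply: (@le_trans _ _ (E / D)).
  rewrite ler_pM2r ?invr_gt0 // ler_norml; apply/andP; split; lra.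
by apply: ler_wpM2l => //; rewrite lef_pV2 ?posrE.
Qed.

Lemma mom_bound (chi : R -> R) : chi1 chi -> exists2 m2 : R, 0 <= m2 &
  forall u, 0 < u -> forall k : int,
    `|chi (expR (- k%:~R) * u)| * (k%:~R - ln u) ^+ 2 <= m2.
Proof.
rewrite /chi1 => hm.
have ub : forall u, 0 < u -> forall k : int,
   ((`|chi (expR (- k%:~R) * u)| * (`|k%:~R - ln u| `^ 2))%:E <= moment 2 chi)%E.
  move=> u u0 k; apply: ereal_sup_ubound; exists u => //; exists k => //.
have m0 : (0 <= moment 2 chi)%E.
  apply: le_trans (ub 1 ltr01 0); rewrite lee_fin mulr_ge0 // powR_ge0.
have fm : moment 2 chi \is a fin_num by rewrite ge0_fin_numE.
exists (fine (moment 2 chi)); first by rewrite fine_ge0.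
move=> u u0 k; have := ub u u0 k; rewrite -(fineK fm) lee_fin.
by rewrite -[2]/(2%:R) powR_mulrn // real_normK // num_real.
Qed.

Lemma den_bound (chi : R -> R) (M : R) : chi2 chi ->
  (forall x, 0 < x -> `|chi x| <= M) -> forall u, 0 < u ->
  eta_chi chi <= sup (range (fun k : int => chi (expR (- k%:~R) * u))).
Proof.
move=> h2 hM u u0.
have /andP[k1 k2] := floor_itv (ln u).
set k := Num.floor (ln u) in k1 k2 *.
have hz : expR (- k%:~R) * u = expR (ln u - k%:~R) by rewrite expRD lnK ?posrE // mulrC.
apply: (@le_trans _ _ (chi (expR (- k%:~R) * u))).
  apply: inf_lbound; first by case: h2.
  exists (expR (- k%:~R) * u) => //; rewrite hz /= in_itv /=; apply/andP; split.
    by rewrite -[X in X <= _]expR0 ler_expR subr_ge0.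
  rewrite ler_expR lerBlDl; rewrite intrD in k2; move: k2; rewrite addrC; exact: ltW.
apply: sup_upper_bound; last by exists k.
split; first by exists (chi (expR (- 0%:~R) * u)); exists 0.
exists M => _ [j _ <-]; apply: le_trans (hM _ _); first exact: ler_norm.
by rewrite mulr_gt0 ?expR_gt0.
Qed.

Lemma mom_w (chi : R -> R) (m2 : R) :
  (forall u, 0 < u -> forall k : int,
    `|chi (expR (- k%:~R) * u)| * (k%:~R - ln u) ^+ 2 <= m2) ->
  forall w x (k : int), 0 < w -> 0 < x ->
  `|chi (expR (- k%:~R) * x `^ w)| * (w ^+ 2 * (k%:~R / w - ln x) ^+ 2) <= m2.
Proof.
move=> Hm w x k w0 x0; have := Hm (x `^ w) (powR_gt0 _ x0) k.
rewrite ln_powR.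
have -> : w ^+ 2 * (k%:~R / w - ln x) ^+ 2 = (k%:~R - w * ln x) ^+ 2.
  by field; rewrite gt_eqF.
done.
Qed.

Lemma part1 (chi : R -> R) (M m2 : R) :
  chi2 chi -> 0 < eta_chi chi -> (forall x, 0 < x -> `|chi x| <= M) ->
  0 <= M -> 0 <= m2 ->
  (forall u, 0 < u -> forall k : int,
    `|chi (expR (- k%:~R) * u)| * (k%:~R - ln u) ^+ 2 <= m2) ->
  (forall f : R -> R,
     (forall x, 0 < x -> 0 <= f x) ->
     (exists M : R, forall x, 0 < x -> `|f x| <= M) ->
     forall x, 0 < x -> log_cont_at f x ->
       MG chi w f x @[w --> +oo] --> f x).
Proof.
move=> h2 eta0 HM M0 m20 Hm f f0 [Mf HMf] x x0 hc.
have Mf0 : 0 <= Mf by apply: le_trans (HMf x x0).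
set eta := eta_chi chi in eta0 *.
apply/cvgrPdist_le => e e0.
have ee0 : 0 < e * eta by rewrite mulr_gt0.
set ep := e * eta / (2 * (M + 1)).
have ep0 : 0 < ep by rewrite /ep divr_gt0 // mulr_gt0 // ltr_wpDl.
have [d d0 hd] := hc ep ep0.
set P := d ^+ 2 * eta * e.
have P0 : 0 < P by rewrite /P !mulr_gt0 // exprn_gt0.
set K := 4 * Mf * m2 / P.
have K0 : 0 <= K by rewrite /K divr_ge0 ?mulr_ge0 // ltW.
have hK : K * P = 4 * Mf * m2 by rewrite /K divfK // gt_eqF.
exists (1 + K); split; first by rewrite num_real.
move=> w hw.
have w0 : 0 < w by apply: lt_trans hw; rewrite ltr_wpDr.
set E := M * ep + 2 * Mf * m2 / (w ^+ 2 * d ^+ 2).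
have wd0 : 0 < w ^+ 2 * d ^+ 2 by rewrite mulr_gt0 // exprn_gt0.
rewrite distrC.
apply: (@le_trans _ _ (E / eta)); last first.
  rewrite ler_pdivrMr // /E.
  have h1 : M * ep <= e * eta / 2.
    rewrite /ep mulrA ler_pdivrMr ?mulr_gt0 ?ltr_wpDl //.
    have -> : e * eta / 2 * (2 * (M + 1)) = e * eta * (M + 1) by field.
    rewrite mulrC; rewrite ler_pM2l //; lra.
  have h3 : 2 * Mf * m2 / (w ^+ 2 * d ^+ 2) <= e * eta / 2.
    rewrite ler_pdivrMr //.
    have hw2 : K <= w ^+ 2 by rewrite expr2; nra.
    have : K * P <= w ^+ 2 * P by rewrite ler_pM2r.
    rewrite hK /P => h; nra.
  lra.
rewrite /MG; apply: (@supA _ _ _ _ M).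
- exact: f0.
- exact: eta0.
- by move=> k; apply: HM; rewrite mulr_gt0 ?expR_gt0 ?powR_gt0.
- by apply: (@den_bound _ _ h2 HM); rewrite powR_gt0.
move=> k.
have hak := HM (expR (- k%:~R) * x `^ w) (mulr_gt0 (expR_gt0 _) (powR_gt0 _ x0)).
have hmk := @mom_w _ _ Hm w x k w0 x0.
have E1 : 0 <= 2 * Mf * m2 / (w ^+ 2 * d ^+ 2) by rewrite divr_ge0 ?mulr_ge0 // ltW.
have E2 : 0 <= M * ep by rewrite mulr_ge0 // ltW.
case: (leP `|k%:~R / w - ln x| d) => hkd.
  have hb : `|f (expR (k%:~R / w)) - f x| <= ep.
    by apply/ltW/hd; rewrite ?expR_gt0 // expRK.
  apply: (@le_trans _ _ (M * ep)); last by rewrite /E lerDl.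
  by apply: ler_pM.
have hb : `|f (expR (k%:~R / w)) - f x| <= 2 * Mf.
  apply: le_trans (ler_normB _ _) _.
  have := HMf _ (expR_gt0 (k%:~R / w)); have := HMf x x0; lra.
have hsq : d ^+ 2 <= (k%:~R / w - ln x) ^+ 2.
  rewrite -[X in _ <= X]real_normK ?num_real // !expr2; apply: ler_pM; rewrite ?ltW //.
have ha : `|chi (expR (- k%:~R) * x `^ w)| <= m2 / (w ^+ 2 * d ^+ 2).
  rewrite ler_pdivlMr //; apply: le_trans hmk.
  apply: ler_wpM2l => //; apply: ler_wpM2l => //; exact: exprn_ge0 (ltW w0).
apply: (@le_trans _ _ (m2 / (w ^+ 2 * d ^+ 2) * (2 * Mf))).
  by apply: ler_pM.
have -> : m2 / (w ^+ 2 * d ^+ 2) * (2 * Mf) = 2 * Mf * m2 / (w ^+ 2 * d ^+ 2) by rewrite mulrC !mulrA.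
rewrite /E; lra.
Qed.

Lemma far_alg (G1 G2 s y Mg : R) : `|G1| <= Mg -> `|G2| <= Mg ->
  `|G1 * (1 + s ^+ 2) - G2 * (1 + y ^+ 2)| / (1 + y ^+ 2) <= Mg * (3 + 2 * (s - y) ^+ 2).
Proof.
move=> h1 h2; have Mg0 : 0 <= Mg by apply: le_trans h1.
have y0 : 0 < 1 + y ^+ 2 by rewrite ltr_pwDl // sqr_ge0.
rewrite ler_pdivrMr //.
apply: le_trans (ler_normB _ _) _.
have s0 : 0 <= 1 + s ^+ 2 by rewrite addr_ge0 // sqr_ge0.
rewrite !normrM (ger0_norm (ltW y0)) (ger0_norm s0).
have hs : 1 + s ^+ 2 <= (2 + 2 * (s - y) ^+ 2) * (1 + y ^+ 2).
  have := sqr_ge0 (s - 2 * y); have := sqr_ge0 y; have := sqr_ge0 (s - y); nra.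
have a1 : `|G1| * (1 + s ^+ 2) <= Mg * ((2 + 2 * (s - y) ^+ 2) * (1 + y ^+ 2)).
  by apply: ler_pM.
have a2 : `|G2| * (1 + y ^+ 2) <= Mg * (1 + y ^+ 2) by rewrite ler_pM2r.
have -> : Mg * (3 + 2 * (s - y) ^+ 2) * (1 + y ^+ 2) =
   Mg * ((2 + 2 * (s - y) ^+ 2) * (1 + y ^+ 2)) + Mg * (1 + y ^+ 2) by ring.
lra.
Qed.

Lemma close_alg (G1 G2 s y Mg dl ep : R) : `|G1| <= Mg -> `|G1 - G2| <= ep ->
  `|s - y| <= dl -> dl <= 1 ->
  `|G1 * (1 + s ^+ 2) - G2 * (1 + y ^+ 2)| / (1 + y ^+ 2) <= Mg * (2 * dl) + ep.
Proof.
move=> h1 h2 h3 h4; have Mg0 : 0 <= Mg by apply: le_trans h1.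
have dl0 : 0 <= dl by apply: le_trans h3.
have y0 : 0 < 1 + y ^+ 2 by rewrite ltr_pwDl // sqr_ge0.
rewrite ler_pdivrMr //.
have -> : G1 * (1 + s ^+ 2) - G2 * (1 + y ^+ 2) =
  G1 * ((s - y) * (s + y)) + (G1 - G2) * (1 + y ^+ 2) by ring.
apply: le_trans (ler_normD _ _) _.
rewrite !normrM (ger0_norm (ltW y0)).
have hsy : `|s + y| <= 2 * (1 + y ^+ 2).
  have -> : s + y = (s - y) + 2 * y by ring.
  apply: le_trans (ler_normD _ _) _; rewrite normrM ger0_norm //.
  have hz := sqr_ge0 (`|y| - 1); have hy : `|y| ^+ 2 = y ^+ 2 by rewrite real_normK ?num_real.
  have := normr_ge0 y; nra.
have a1 : `|s - y| * `|s + y| <= dl * (2 * (1 + y ^+ 2)) by apply: ler_pM.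
have a2 : `|G1| * (`|s - y| * `|s + y|) <= Mg * (dl * (2 * (1 + y ^+ 2))).
  by apply: ler_pM => //; rewrite mulr_ge0.
have a3 : `|G1 - G2| * (1 + y ^+ 2) <= ep * (1 + y ^+ 2) by rewrite ler_pM2r.
have -> : (Mg * (2 * dl) + ep) * (1 + y ^+ 2) =
   Mg * (dl * (2 * (1 + y ^+ 2))) + ep * (1 + y ^+ 2) by ring.
lra.
Qed.

Lemma part2 (chi : R -> R) (M m2 : R) :
  chi2 chi -> 0 < eta_chi chi -> (forall x, 0 < x -> `|chi x| <= M) ->
  0 <= M -> 0 <= m2 ->
  (forall u, 0 < u -> forall k : int,
    `|chi (expR (- k%:~R) * u)| * (k%:~R - ln u) ^+ 2 <= m2) ->
  (forall f : R -> R, UB_omega_plus f ->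
     wnorm (fun x => MG chi w f x - f x) @[w --> +oo] --> 0%E).
Proof.
move=> h2 eta0 HM M0 m20 Hm f [f0 [[Mg HMg] hu]].
have Mg0 : 0 <= Mg := le_trans (normr_ge0 _) (HMg 1 ltr01).
set eta := eta_chi chi in eta0 *.
have om0 : forall x : R, 0 < omega_bar x.
  by move=> x; rewrite /omega_bar invr_gt0 ltr_pwDl // sqr_ge0.
have key : forall e, 0 < e -> exists W, forall w, W < w -> forall x, 0 < x ->
    omega_bar x * `|MG chi w f x - f x| <= e.
  move=> e e0.
  have ee0 : 0 < e * eta by rewrite mulr_gt0.
  set ep := e * eta / (2 * (M + 1) * (2 * Mg + 1)).
  have ep0 : 0 < ep by rewrite /ep divr_gt0 // !mulr_gt0 // ltr_wpDl // mulr_ge0.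
  have [d0 d00 hd0] := hu ep ep0.
  set d := Num.min d0 (Num.min ep 1).
  have d0p : 0 < d by rewrite /d !lt_min d00 ep0 ltr01.
  have dd0 : d <= d0 by rewrite /d ge_min lexx.
  have dep : d <= ep by rewrite /d !ge_min lexx orbT.
  have d1 : d <= 1 by rewrite /d !ge_min lexx !orbT.
  set C := Mg * m2 * (3 / d ^+ 2 + 2).
  have C0 : 0 <= C by rewrite /C !mulr_ge0 // addr_ge0 // divr_ge0 // sqr_ge0.
  set K := 2 * C / (e * eta).
  have K0 : 0 <= K by apply: divr_ge0; [rewrite mulr_ge0 | apply: ltW].
  have hK : K * (e * eta) = 2 * C by rewrite /K divfK // gt_eqF.
  exists (1 + K) => w hw x x0.
  have w0 : 0 < w by apply: lt_trans hw; rewrite ltr_wpDr.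
  have w20 : 0 < w ^+ 2 by rewrite exprn_gt0.
  have wd0 : 0 < w ^+ 2 * d ^+ 2 by rewrite mulr_gt0 // exprn_gt0.
  set E := M * ((2 * Mg + 1) * ep) + C / w ^+ 2.
  have hE : E / eta <= e.
    rewrite ler_pdivrMr // /E.
    have h1 : M * ((2 * Mg + 1) * ep) <= e * eta / 2.
      have -> : M * ((2 * Mg + 1) * ep) = e * eta * (M / (2 * (M + 1))).
        by rewrite /ep; field; apply/andP; split; rewrite gt_eqF // ?ltr_wpDl // mulr_ge0.
      rewrite ler_pM2l // ler_pdivrMr ?mulr_gt0 ?ltr_wpDl //; lra.
    have h3 : C / w ^+ 2 <= e * eta / 2.
      rewrite ler_pdivrMr //.
      have hw2 : K <= w ^+ 2 by rewrite expr2; nra.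
      have : K * (e * eta) <= w ^+ 2 * (e * eta) by rewrite ler_pM2r.
      rewrite hK => h; nra.
    lra.
  have hsup : `|MG chi w f x - f x| <= (E / omega_bar x) / eta.
    rewrite /MG; apply: (@supA _ _ _ _ M).
    - exact: f0.
    - exact: eta0.
    - by move=> k; apply: HM; rewrite mulr_gt0 ?expR_gt0 ?powR_gt0.
    - by apply: (@den_bound _ _ h2 HM); rewrite powR_gt0.
    move=> k; rewrite ler_pdivlMr //.
    have hak := HM (expR (- k%:~R) * x `^ w) (mulr_gt0 (expR_gt0 _) (powR_gt0 _ x0)).
    have hmk := @mom_w _ _ Hm w x k w0 x0.
    set a := `|chi _| in hak hmk *.
    have a0 : 0 <= a by apply: normr_ge0.
    set s := k%:~R / w in hmk *.
    set y := ln x in hmk *.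
    set t := expR s.
    have t0 : 0 < t by apply: expR_gt0.
    have ht : ln t = s by rewrite /t expRK.
    have oms : omega_bar t = (1 + s ^+ 2)^-1 by rewrite /omega_bar ht.
    have omy : omega_bar x = (1 + y ^+ 2)^-1 by [].
    have sp : 1 + s ^+ 2 != 0 by rewrite gt_eqF // ltr_pwDl // sqr_ge0.
    have yp : 1 + y ^+ 2 != 0 by rewrite gt_eqF // ltr_pwDl // sqr_ge0.
    have fb : f t = (omega_bar t * f t) * (1 + s ^+ 2) by rewrite oms; field.
    have fx : f x = (omega_bar x * f x) * (1 + y ^+ 2) by rewrite omy; field.
    have hGt := HMg t t0; have hGx := HMg x x0.
    rewrite -mulrA {1}fb {1}fx omy.
    case: (leP `|s - y| d) => hkd.
      have hg : `|omega_bar t * f t - omega_bar x * f x| <= ep.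
        by apply/ltW/hd0 => //; rewrite ht; apply: le_trans dd0.
      have := @close_alg _ _ _ _ _ _ _ hGt hg hkd d1.
      set Q := `|_| / _ => hQ.
      have hQ' : Q <= (2 * Mg + 1) * ep.
        apply: le_trans hQ _; have : Mg * d <= Mg * ep by rewrite ler_wpM2l.
        lra.
      have Q0 : 0 <= Q by rewrite /Q divr_ge0 // addr_ge0 // sqr_ge0.
      apply: (@le_trans _ _ (M * ((2 * Mg + 1) * ep))); first by apply: ler_pM.
      rewrite /E lerDl divr_ge0 // ltW //.
    have := @far_alg _ _ s y _ hGt hGx.
    set Q := `|_| / _ => hQ.
    have hsq : d ^+ 2 <= (s - y) ^+ 2.
      rewrite -[X in _ <= X]real_normK ?num_real // !expr2; apply: ler_pM; rewrite ?ltW //.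
    have ha : a <= m2 / (w ^+ 2 * d ^+ 2).
      rewrite ler_pdivlMr //; apply: le_trans hmk.
      apply: ler_wpM2l => //; apply: ler_wpM2l => //; exact: ltW.
    have hb : a * (s - y) ^+ 2 <= m2 / w ^+ 2.
      by rewrite ler_pdivlMr // -mulrA [_ * w ^+ 2]mulrC.
    apply: (@le_trans _ _ (a * (Mg * (3 + 2 * (s - y) ^+ 2)))).
      by apply: ler_wpM2l.
    rewrite /E; have -> : C / w ^+ 2 = 3 * Mg * (m2 / (w ^+ 2 * d ^+ 2)) + 2 * Mg * (m2 / w ^+ 2).
      by rewrite /C; field; apply/andP; split; rewrite gt_eqF // exprn_gt0.
    have e1 : 3 * Mg * a <= 3 * Mg * (m2 / (w ^+ 2 * d ^+ 2)).
      by rewrite ler_wpM2l // mulr_ge0.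
    have e2 : 2 * Mg * (a * (s - y) ^+ 2) <= 2 * Mg * (m2 / w ^+ 2).
      by rewrite ler_wpM2l // mulr_ge0.
    have e3 : 0 <= M * ((2 * Mg + 1) * ep).
      by apply: mulr_ge0 => //; apply: mulr_ge0; [rewrite addr_ge0 // mulr_ge0 | exact: ltW].
    rewrite /E.
    have -> : a * (Mg * (3 + 2 * (s - y) ^+ 2)) =
       3 * Mg * a + 2 * Mg * (a * (s - y) ^+ 2) by ring.
    lra.
  apply: (@le_trans _ _ (omega_bar x * (E / omega_bar x / eta))).
    by rewrite ler_wpM2l // ltW.
  have -> : omega_bar x * (E / omega_bar x / eta) = E / eta.
    by field; apply/andP; split; rewrite gt_eqF.
  exact: hE.
have lo : forall w : R, (0 <= wnorm (fun x => (MG chi w f x - f x)%R))%E.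
  move=> w; apply: (@le_trans _ _ ((omega_bar 1 * `|MG chi w f 1 - f 1|)%:E)).
    by rewrite lee_fin mulr_ge0 // ltW.
  by apply: ereal_sup_ubound; exists 1 => //; rewrite /Rpos /= ltr01.
have hi : forall e, 0 < e -> \forall w \near +oo,
    (wnorm (fun x => (MG chi w f x - f x)%R) <= e%:E)%E.
  move=> e e0; have [W HW] := key e e0.
  exists W; split; first by rewrite num_real.
  move=> w hw; apply: ge_ereal_sup => _ [x x0 <-]; rewrite lee_fin.
  exact: HW.
apply/fine_cvgP; split.
  apply: filterS (hi 1 ltr01) => w hw.
  by rewrite ge0_fin_numE ?lo //; apply: le_lt_trans hw (ltry _).
apply/cvgrPdist_le => e e0; apply: filterS (hi e e0) => w /=.
move: (lo w); case: (wnorm _) => [r| |] //= r0 hr.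
by rewrite sub0r normrN ger0_norm -?lee_fin.
Qed.

End H.

Theorem theorem3p3 (R : realType) (chi : R -> R) :
  is_kernel chi -> chi1 chi -> chi2 chi -> 0 < eta_chi chi ->
  (forall f : R -> R,
     (forall x, 0 < x -> 0 <= f x) ->
     (exists M : R, forall x, 0 < x -> `|f x| <= M) ->
     forall x, 0 < x -> log_cont_at f x ->
       MG chi w f x @[w --> +oo] --> f x) /\
  (forall f : R -> R, UB_omega_plus f ->
     wnorm (fun x => MG chi w f x - f x) @[w --> +oo] --> 0%E).
Proof.
move=> [_ [M HM]] h1 h2 eta0.
have M0 : 0 <= M by apply: le_trans (HM 1 ltr01); apply: normr_ge0.
have [m2 m20 Hm] := @mom_bound R chi h1.
split.
  exact: (@part1 R chi M m2 h2 eta0 HM M0 m20 Hm).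
exact: (@part2 R chi M m2 h2 eta0 HM M0 m20 Hm).
Qed.
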